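(* Under the triangle scaling property with constant $G\ge1$, the iterates of acc-BPP3 satisfy, for every $T\ge1$ and every $\lambda\in\Lambda$, $$d(\lambda)-d(\lambda_T)\le\frac{4G\,D_h(\lambda,\lambda_0)}{\big(\sum_{k=0}^{T-1}\sqrt{\eta_k}\big)^2}.$$
   Context: $\Lambda\subseteq\mathbb{R}^m$ closed convex, $d:\Lambda\to\mathbb{R}$ concave. $h$ strictly convex, continuously differentiable on $\Lambda$, $D_h(\lambda,\tilde\lambda)=h(\lambda)-h(\tilde\lambda)-\nabla h(\tilde\lambda)^\top(\lambda-\tilde\lambda)$. Triangle scaling property with constant $G$: $D_h((1-\theta)\lambda+\theta\lambda_1,(1-\theta)\lambda+\theta\lambda_2)\le G\theta^2D_h(\lambda_1,\lambda_2)$ for all $\lambda,\lambda_1,\lambda_2\in\Lambda$, $\theta\in[0,1]$. Algorithm acc-BPP3: given $\lambda_0\in\Lambda$, $v_0=\lambda_0$, $\theta_0=1$, $\eta_k>0$; for $k\ge0$: $y_k=\theta_kv_k+(1-\theta_k)\lambda_k$; $\lambda_{k+1}\in\arg\max_{\lambda\in\Lambda}\{d(\lambda)-\frac1{\eta_k}D_h(\lambda,y_k)\}$; $v_{k+1}\in\arg\max_{\lambda\in\Lambda}\big\{-GD_h(\lambda,\lambda_0)+\sum_{j=0}^k\frac{\eta_j}{\theta_j}\big(d(\lambda_{j+1})+\frac1{\eta_j}(\nabla h(\lambda_{j+1})-\nabla h(y_j))^\top(\lambda-\lambda_{j+1})\big)\big\}$; $\theta_{k+1}\in(0,1]$ is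 defined by $\frac{\eta_k}{\theta_k^2}=\frac{\eta_{k+1}}{\theta_{k+1}^2}-\frac{\eta_{k+1}}{\theta_{k+1}}$. All maximizers are assumed to exist. *)

(* Defs.v *)
From Stdlib Require Import Reals Lra.
Open Scope R_scope.

(* Vectors of R^m are represented as functions nat -> R whose support is
   contained in {0,...,m-1} (see [in_Rm]). *)
Definition vec := nat -> R.

Definition in_Rm (m : nat) (x : vec) : Prop := forall i, (m <= i)%nat -> x i = 0.

Definition vadd (x y : vec) : vec := fun i => x i + y i.
Definition vsub (x y : vec) : vec := fun i => x i - y i.
Definition vscale (a : R) (x : vec) : vec := fun i => a * x i.

Fixpoint dot (m : nat) (x y : vec) : R :=
  match m with
  | O => 0
  | S k => dot k x y + x k * y k
  end.

Definition vnorm (m : nat) (x : vec) : R := sqrt (dot m x x).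

Definition subset_Rm (m : nat) (L : vec -> Prop) : Prop :=
  forall x, L x -> in_Rm m x.

Definition closed_in_Rm (m : nat) (L : vec -> Prop) : Prop :=
  forall x, in_Rm m x ->
    (forall eps, 0 < eps -> exists y, L y /\ vnorm m (vsub x y) < eps) -> L x.

Definition convex_in (L : vec -> Prop) : Prop :=
  forall x y t, L x -> L y -> 0 <= t <= 1 ->
    L (vadd (vscale t x) (vscale (1 - t) y)).

Definition concave_on (L : vec -> Prop) (d : vec -> R) : Prop :=
  forall x y t, L x -> L y -> 0 <= t <= 1 ->
    t * d x + (1 - t) * d y <= d (vadd (vscale t x) (vscale (1 - t) y)).

Definition strictly_convex_on (L : vec -> Prop) (h : vec -> R) : Prop :=
  forall x y t, L x -> L y -> x <> y -> 0 < t < 1 ->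
    h (vadd (vscale t x) (vscale (1 - t) y)) < t * h x + (1 - t) * h y.

Definition has_gradient_at (m : nat) (h : vec -> R) (x g : vec) : Prop :=
  forall eps, 0 < eps -> exists delta, 0 < delta /\
    forall z, in_Rm m z -> vnorm m (vsub z x) < delta ->
      Rabs (h z - h x - dot m g (vsub z x)) <= eps * vnorm m (vsub z x).

Definition C1_on (m : nat) (L : vec -> Prop) (h : vec -> R) (gh : vec -> vec) : Prop :=
  (forall x, L x -> in_Rm m (gh x) /\ has_gradient_at m h x (gh x)) /\
  (forall x, L x -> forall eps, 0 < eps -> exists delta, 0 < delta /\
     forall z, L z -> vnorm m (vsub z x) < delta ->
       vnorm m (vsub (gh z) (gh x)) < eps).

Definition Dh (m : nat) (h : vec -> R) (gh : vec -> vec) (x y : vec) : R :=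
  h x - h y - dot m (gh y) (vsub x y).

Definition triangle_scaling (m : nat) (L : vec -> Prop) (h : vec -> R)
    (gh : vec -> vec) (G : R) : Prop :=
  forall l l1 l2 th, L l -> L l1 -> L l2 -> 0 <= th <= 1 ->
    Dh m h gh (vadd (vscale (1 - th) l) (vscale th l1))
              (vadd (vscale (1 - th) l) (vscale th l2))
    <= G * th ^ 2 * Dh m h gh l1 l2.

Definition accBPP3 (m : nat) (L : vec -> Prop) (d h : vec -> R) (gh : vec -> vec)
    (G : R) (eta theta : nat -> R) (lam v y : nat -> vec) : Prop :=
  L (lam O) /\ v O = lam O /\ theta O = 1 /\
  (forall k, 0 < eta k) /\
  (forall k, y k = vadd (vscale (theta k) (v k)) (vscale (1 - theta k) (lam k))) /\
  (forall k, L (lam (S k)) /\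
     forall l, L l ->
       d l - / eta k * Dh m h gh l (y k)
       <= d (lam (S k)) - / eta k * Dh m h gh (lam (S k)) (y k)) /\
  (forall k, L (v (S k)) /\
     let obj := fun l : vec =>
       - G * Dh m h gh l (lam O)
       + sum_f_R0 (fun j => eta j / theta j *
            (d (lam (S j)) + / eta j *
               dot m (vsub (gh (lam (S j))) (gh (y j))) (vsub l (lam (S j))))) k in
     forall l, L l -> obj l <= obj (v (S k))) /\
  (forall k, 0 < theta (S k) <= 1 /\
     eta k / theta k ^ 2 = eta (S k) / theta (S k) ^ 2 - eta (S k) / theta (S k)).

(* Main.v *)
Require Import Defs.
From Stdlib Require Import Reals Lra Psatz Lia Classical FunctionalExtensionality.
Open Scope R_scope.

Lemma dot_add_r m a b c : dot m a (vadd b c) = dot m a b + dot m a c.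
Proof. induction m; simpl; [ring| rewrite IHm; unfold vadd; ring]. Qed.
Lemma dot_scale_r m a t b : dot m a (vscale t b) = t * dot m a b.
Proof. induction m; simpl; [ring| rewrite IHm; unfold vscale; ring]. Qed.
Lemma dot_sub_r m a b c : dot m a (vsub b c) = dot m a b - dot m a c.
Proof. induction m; simpl; [ring| rewrite IHm; unfold vsub; ring]. Qed.
Lemma dot_sub_l m a b c : dot m (vsub a b) c = dot m a c - dot m b c.
Proof. induction m; simpl; [ring| rewrite IHm; unfold vsub; ring]. Qed.
Lemma dot_scale_l m t a b : dot m (vscale t a) b = t * dot m a b.
Proof. induction m; simpl; [ring| rewrite IHm; unfold vscale; ring]. Qed.
Lemma dot_nonneg m a : 0 <= dot m a a.
Proof. induction m; simpl; [lra| nra]. Qed.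

Lemma vnorm_scale m t a : 0 <= t -> vnorm m (vscale t a) = t * vnorm m a.
Proof.
  intro Ht. unfold vnorm. rewrite dot_scale_l, dot_scale_r, <- Rmult_assoc.
  rewrite sqrt_mult_alt by nra. rewrite sqrt_square by lra. reflexivity.
Qed.

Lemma approx m (L : vec -> Prop) h gh x v :
  subset_Rm m L -> C1_on m L h gh -> L x -> L v ->
  forall eps, 0 < eps -> exists t, 0 < t < 1 /\
    Rabs (h (vadd (vscale t x) (vscale (1-t) v)) - h v - t * dot m (gh v) (vsub x v))
      <= eps * (t * vnorm m (vsub x v)).
Proof.
  intros Hs [HC _] Lx Lv eps Heps.
  destruct (HC v Lv) as [_ Hg].
  destruct (Hg eps Heps) as [del [Hdel Hd]].
  set (N := vnorm m (vsub x v)).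
  assert (HN : 0 <= N) by (unfold N, vnorm; apply sqrt_pos).
  set (t := Rmin (1/2) (del / (2 * (N + 1)))).
  assert (Ht1 : t <= 1/2) by apply Rmin_l.
  assert (Ht2 : t <= del / (2*(N+1))) by apply Rmin_r.
  assert (Ht0 : 0 < t).
  { unfold t; apply Rmin_glb_lt; [lra| apply Rdiv_lt_0_compat; lra]. }
  exists t; split; [lra|].
  assert (Hw : vsub (vadd (vscale t x) (vscale (1-t) v)) v = vscale t (vsub x v)).
  { apply functional_extensionality; intro i; unfold vsub, vadd, vscale; ring. }
  assert (Hnw : vnorm m (vsub (vadd (vscale t x) (vscale (1-t) v)) v) = t * N).
  { rewrite Hw; apply vnorm_scale; lra. }
  specialize (Hd (vadd (vscale t x) (vscale (1-t) v))).
  rewrite Hnw, Hw, dot_scale_r in Hd.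
  apply Hd.
  - intros i Hi. unfold vadd, vscale. rewrite (Hs x Lx i Hi), (Hs v Lv i Hi). ring.
  - assert (Hk : del / (2*(N+1)) * (2*(N+1)) = del) by (field; lra).
    assert (t * (2*(N+1)) <= del).
    { rewrite <- Hk. apply Rmult_le_compat_r; lra. }
    nra.
Qed.

Lemma fo_lower m L h gh x v c :
  subset_Rm m L -> C1_on m L h gh -> L x -> L v ->
  (forall t, 0 < t < 1 -> t * c <= h (vadd (vscale t x) (vscale (1-t) v)) - h v) ->
  c <= dot m (gh v) (vsub x v).
Proof.
  intros Hs HC Lx Lv H.
  set (D := dot m (gh v) (vsub x v)).
  set (N := vnorm m (vsub x v)).
  assert (HN : 0 <= N) by (unfold N, vnorm; apply sqrt_pos).
  destruct (Rle_or_lt c D) as [Hle|Hlt]; [exact Hle|exfalso].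
  set (e := (c - D)/(N+1)).
  assert (He0 : 0 < e) by (apply Rdiv_lt_0_compat; lra).
  assert (He : e * (N+1) = c - D) by (unfold e; field; lra).
  destruct (approx m L h gh x v Hs HC Lx Lv e He0) as [t [Ht Ha]].
  fold D N in Ha.
  specialize (H t Ht).
  set (a := h (vadd (vscale t x) (vscale (1 - t) v)) - h v - t * D) in *.
  pose proof (Rle_abs a).
  assert (e*(t*N) = t*(c-D) - t*e) by (rewrite <- He; ring).
  assert (0 < t*e) by (apply Rmult_lt_0_compat; lra).
  unfold a in *. lra.
Qed.

Lemma fo_upper m L h gh x v c :
  subset_Rm m L -> C1_on m L h gh -> L x -> L v ->
  (forall t, 0 < t < 1 -> h (vadd (vscale t x) (vscale (1-t) v)) - h v <= t * c) ->
  dot m (gh v) (vsub x v) <= c.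
Proof.
  intros Hs HC Lx Lv H.
  set (D := dot m (gh v) (vsub x v)).
  set (N := vnorm m (vsub x v)).
  assert (HN : 0 <= N) by (unfold N, vnorm; apply sqrt_pos).
  destruct (Rle_or_lt D c) as [Hle|Hlt]; [exact Hle|exfalso].
  set (e := (D - c)/(N+1)).
  assert (He0 : 0 < e) by (apply Rdiv_lt_0_compat; lra).
  assert (He : e * (N+1) = D - c) by (unfold e; field; lra).
  destruct (approx m L h gh x v Hs HC Lx Lv e He0) as [t [Ht Ha]].
  fold D N in Ha.
  specialize (H t Ht).
  set (a := h (vadd (vscale t x) (vscale (1 - t) v)) - h v - t * D) in *.
  pose proof (Rle_abs (-a)). rewrite Rabs_Ropp in H0.
  assert (e*(t*N) = t*(D-c) - t*e) by (rewrite <- He; ring).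
  assert (0 < t*e) by (apply Rmult_lt_0_compat; lra).
  unfold a in *. lra.
Qed.

Lemma Dh_nonneg m L h gh x y : subset_Rm m L -> strictly_convex_on L h ->
  C1_on m L h gh -> L x -> L y -> 0 <= Dh m h gh x y.
Proof.
  intros Hs Hc HC Lx Ly. unfold Dh.
  destruct (classic (x = y)) as [<-|Hne].
  - assert (H : vsub x x = vscale 0 x)
      by (apply functional_extensionality; intro; unfold vsub, vscale; ring).
    rewrite H, dot_scale_r. lra.
  - assert (dot m (gh y) (vsub x y) <= h x - h y); [|lra].
    apply (fo_upper m L h gh x y); auto.
    intros t Ht. specialize (Hc x y t Lx Ly Hne Ht). lra.
Qed.

Lemma three_point m h gh z y l :
  Dh m h gh z y - Dh m h gh z l - Dh m h gh l y = dot m (vsub (gh l) (gh y)) (vsub z l).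
Proof. unfold Dh. rewrite !dot_sub_l, !dot_sub_r. ring. Qed.

Lemma sumS f k : sum_f_R0 f (S k) = sum_f_R0 f k + f (S k).
Proof. reflexivity. Qed.
Lemma sum0 f : sum_f_R0 f 0 = f 0%nat.
Proof. reflexivity. Qed.

Lemma convex2 (L : vec -> Prop) x y s t : convex_in L -> L x -> L y -> 0 <= s -> 0 <= t -> s + t = 1 ->
  L (vadd (vscale s x) (vscale t y)).
Proof. intros Hc Lx Ly Hs Ht Hst. assert (t = 1 - s) by lra. subst t. apply Hc; auto; lra. Qed.

Theorem mainTheorem10
  (m : nat) (L : vec -> Prop) (d h : vec -> R) (gh : vec -> vec) (G : R)
  (eta theta : nat -> R) (lam v y : nat -> vec) :
  subset_Rm m L -> closed_in_Rm m L -> convex_in L ->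
  concave_on L d ->
  strictly_convex_on L h -> C1_on m L h gh ->
  1 <= G -> triangle_scaling m L h gh G ->
  accBPP3 m L d h gh G eta theta lam v y ->
  forall (T : nat), (1 <= T)%nat ->
  forall l, L l ->
    d l - d (lam T)
    <= 4 * G * Dh m h gh l (lam O)
       / (sum_f_R0 (fun k => sqrt (eta k)) (T - 1)) ^ 2.
Proof.
  intros Hs _ Hcvx Hcc Hsc HC HG Htri Hacc.
  destruct Hacc as (HL0 & Hv0 & Hth0 & Heta & Hy & Hlam & Hv & Hth).
  assert (thb : forall k, 0 < theta k <= 1).
  { intro k; destruct k; [rewrite Hth0; lra| apply Hth]. }
  assert (Llam : forall k, L (lam k)).
  { intro k; destruct k; [auto| apply Hlam]. }
  assert (Lv : forall k, L (v k)).
  { intro k; destruct k; [rewrite Hv0; auto| apply Hv]. }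
  assert (Ly : forall k, L (y k)).
  { intro k; rewrite Hy; apply Hcvx; auto; specialize (thb k); lra. }
  pose (ell := fun k l => d (lam (S k)) + / eta k *
               dot m (vsub (gh (lam (S k))) (gh (y k))) (vsub l (lam (S k)))).
  pose (obj := fun k l => - G * Dh m h gh l (lam O)
       + sum_f_R0 (fun j => eta j / theta j * ell j l) k).
  assert (HV : forall k l, L l -> obj k l <= obj k (v (S k))).
  { intros k l Hl. destruct (Hv k) as [_ H]. exact (H l Hl). }
  assert (HU : forall k l, L l -> d l <= ell k l).
  { intros k l Hl. destruct (Hlam k) as [Ll' Hmax].
    pose proof (Heta k) as Hek.
    set (l' := lam (S k)) in *.
    assert (Hfo : eta k * (d l - d l') + (dot m (gh (y k)) l - dot m (gh (y k)) l')
                  <= dot m (gh l') (vsub l l')).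
    { apply (fo_lower m L h gh l l'); auto.
      intros t Ht.
      set (w := vadd (vscale t l) (vscale (1-t) l')).
      assert (Lw : L w) by (apply Hcvx; auto; lra).
      pose proof (Hmax w Lw) as H1.
      pose proof (Hcc l l' t Hl Ll' ltac:(lra)) as H2. fold w in H2.
      assert (Hdw : dot m (gh (y k)) w = t * dot m (gh (y k)) l + (1-t) * dot m (gh (y k)) l')
        by (unfold w; rewrite dot_add_r, !dot_scale_r; ring).
      unfold Dh in H1. rewrite !dot_sub_r, Hdw in H1.
      set (K := h w - h l' - t * (dot m (gh (y k)) l - dot m (gh (y k)) l')).
      assert (H3 : d w - d l' <= / eta k * K) by (unfold K; lra).
      assert (H4 : eta k * (d w - d l') <= eta k * (/ eta k * K))
        by (apply Rmult_le_compat_l; lra).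
      replace (eta k * (/ eta k * K)) with K in H4 by (field; lra).
      assert (H5 : eta k * (t*(d l - d l')) <= eta k * (d w - d l'))
        by (apply Rmult_le_compat_l; lra).
      unfold K in H4. lra. }
    unfold ell. fold l'. rewrite dot_sub_l, !dot_sub_r. rewrite dot_sub_r in Hfo.
    set (K := dot m (gh l') l - dot m (gh l') l' - (dot m (gh (y k)) l - dot m (gh (y k)) l')).
    assert (H6 : / eta k * (eta k * (d l - d l')) <= / eta k * K).
    { apply Rmult_le_compat_l. left; apply Rinv_0_lt_compat; lra. unfold K; lra. }
    replace (/ eta k * (eta k * (d l - d l'))) with (d l - d l') in H6 by (field; lra).
    lra. }
  assert (Hell_aff : forall k s t x z, s + t = 1 ->
     ell k (vadd (vscale s x) (vscale t z)) = s * ell k x + t * ell k z).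
  { intros k s t x z Hst. unfold ell. rewrite !dot_sub_r, dot_add_r, !dot_scale_r.
    replace s with (1 - t) by lra. ring. }
  assert (Hsum_aff : forall k t x z,
     sum_f_R0 (fun j => eta j / theta j * ell j (vadd (vscale t x) (vscale (1-t) z))) k
     = t * sum_f_R0 (fun j => eta j / theta j * ell j x) k
       + (1-t) * sum_f_R0 (fun j => eta j / theta j * ell j z) k).
  { intros k t x z. induction k.
    - rewrite !sum0. rewrite Hell_aff by ring. ring.
    - rewrite !sumS, IHk. rewrite Hell_aff by ring. ring. }
  assert (HR : forall k l, L l -> obj k l <= obj k (v (S k)) - G * Dh m h gh l (v (S k))).
  { intros k l Hl. set (V := v (S k)). assert (LV : L V) by apply Lv.
    set (P := fun z => sum_f_R0 (fun j => eta j / theta j * ell j z) k).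
    set (X := P l - P V + G * dot m (gh (lam 0%nat)) (vsub l V)).
    assert (Hfo : X / G <= dot m (gh V) (vsub l V)).
    { apply (fo_lower m L h gh l V); auto.
      intros t Ht.
      assert (Lw : L (vadd (vscale t l) (vscale (1-t) V))) by (apply Hcvx; auto; lra).
      pose proof (HV k _ Lw) as Hw. unfold obj in Hw. rewrite Hsum_aff in Hw.
      fold V in Hw. fold (P l) (P V) in Hw.
      unfold Dh in Hw. rewrite !dot_sub_r, dot_add_r, !dot_scale_r in Hw.
      apply (Rmult_le_reg_l G); [lra|].
      replace (G * (t * (X / G))) with (t * X) by (field; lra).
      unfold X. rewrite dot_sub_r. lra. }
    assert (HX : X <= G * dot m (gh V) (vsub l V)).
    { assert (G * (X / G) <= G * dot m (gh V) (vsub l V)) by (apply Rmult_le_compat_l; lra).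
      replace (G * (X / G)) with X in H by (field; lra). exact H. }
    pose proof (three_point m h gh l (lam 0%nat) V) as Htp.
    rewrite dot_sub_l in Htp.
    unfold obj. fold (P l) (P V). unfold X in HX. apply (f_equal (Rmult G)) in Htp. lra. }
  assert (Hcore : forall k Psi M Sk, 0 <= Sk -> Sk = eta k / theta k ^ 2 * (1 - theta k) ->
     Psi <= M - G * Dh m h gh (v (S k)) (v k) -> M <= Sk * d (lam k) ->
     Psi + eta k / theta k * ell k (v (S k)) <= eta k / theta k ^ 2 * d (lam (S k))).
  { intros k Psi M Sk HSk0 HSk HPsi HM.
    destruct (thb k) as [Ht0 Ht1]. pose proof (Heta k) as Hek.
    set (th := theta k) in *. set (V := v (S k)).
    set (z := vadd (vscale (1-th) (lam k)) (vscale th V)).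
    assert (Lz : L z) by (apply convex2; [exact Hcvx| apply Llam| apply Lv| lra| lra| lra]).
    assert (Hlk : d (lam k) <= ell k (lam k)) by (apply HU; auto).
    assert (Haff : ell k z = (1-th) * ell k (lam k) + th * ell k V) by (apply Hell_aff; ring).
    pose proof (three_point m h gh z (y k) (lam (S k))) as Htp.
    pose proof (Dh_nonneg m L h gh z (lam (S k)) Hs Hsc HC Lz (Llam _)).
    pose proof (Dh_nonneg m L h gh (lam (S k)) (y k) Hs Hsc HC (Llam _) (Ly k)).
    assert (Hyk : y k = vadd (vscale (1-th) (lam k)) (vscale th (v k))).
    { rewrite Hy; apply functional_extensionality; intro; unfold vadd, vscale. fold th. ring. }
    pose proof (Htri (lam k) V (v k) th (Llam k) (Lv _) (Lv k) ltac:(lra)) as Htr.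
    rewrite <- Hyk in Htr. fold z in Htr.
    set (E := dot m (vsub (gh (lam (S k))) (gh (y k))) (vsub z (lam (S k)))) in *.
    assert (Hellz : ell k z = d (lam (S k)) + / eta k * E) by reflexivity.
    set (Sp := eta k / th ^ 2).
    assert (HSp : 0 <= Sp) by (unfold Sp; apply Rlt_le, Rdiv_lt_0_compat; nra).
    assert (A1 : Sk * d (lam k) <= Sk * ell k (lam k)) by (apply Rmult_le_compat_l; auto).
    assert (B1 : Sp * ell k z = Sp * (1-th) * ell k (lam k) + Sp * th * ell k V)
      by (rewrite Haff; ring).
    assert (B2 : Sp * ell k z = Sp * d (lam (S k)) + Sp * (/ eta k * E))
      by (rewrite Hellz; ring).
    assert (B3 : Sp * (/ eta k * E) <= Sp * (/ eta k * (G * th^2 * Dh m h gh V (v k)))).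
    { apply Rmult_le_compat_l; auto. apply Rmult_le_compat_l.
      left; apply Rinv_0_lt_compat; lra. lra. }
    assert (B4 : Sp * (/ eta k * (G * th^2 * Dh m h gh V (v k))) = G * Dh m h gh V (v k))
      by (unfold Sp; field; lra).
    assert (B5 : eta k / th = Sp * th) by (unfold Sp; field; lra).
    rewrite B5. fold Sp in HSk. subst Sk. fold V in HPsi. lra. }
  assert (HQ : forall k, obj k (v (S k)) <= eta k / theta k ^ 2 * d (lam (S k))).
  { induction k.
    - assert (E0 : obj 0%nat (v 1%nat) = - G * Dh m h gh (v 1%nat) (lam 0%nat)
                 + eta 0%nat / theta 0%nat * ell 0%nat (v 1%nat)) by reflexivity.
      rewrite E0. apply (Hcore 0%nat _ 0 0); try lra.
      + rewrite Hth0. field.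
      + rewrite Hv0. lra.
    - assert (E1 : obj (S k) (v (S (S k))) = obj k (v (S (S k)))
                 + eta (S k) / theta (S k) * ell (S k) (v (S (S k))))
        by (unfold obj; rewrite sumS; ring).
      rewrite E1. destruct (Hth k) as [[Ht0 Ht1] Heq]. destruct (thb k) as [Hk0 Hk1].
      pose proof (Heta k).
      apply (Hcore (S k) _ (obj k (v (S k))) (eta k / theta k ^ 2)).
      + apply Rlt_le, Rdiv_lt_0_compat; nra.
      + rewrite Heq. field. lra.
      + apply HR. apply Lv.
      + exact IHk. }
  assert (Hsumlow : forall k l, L l ->
     eta k / theta k ^ 2 * d l <= sum_f_R0 (fun j => eta j / theta j * ell j l) k).
  { intros k l Hl. induction k.
    - rewrite sum0. rewrite Hth0. pose proof (Heta 0%nat).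
      replace (eta 0%nat / 1 ^ 2) with (eta 0%nat / 1) by field.
      apply Rmult_le_compat_l; [apply Rlt_le, Rdiv_lt_0_compat; lra | apply HU; auto].
    - rewrite sumS. destruct (Hth k) as [[Ht0 Ht1] Heq]. pose proof (Heta (S k)).
      assert (eta (S k)/theta (S k) * d l <= eta (S k)/theta (S k) * ell (S k) l)
        by (apply Rmult_le_compat_l; [apply Rlt_le, Rdiv_lt_0_compat; auto | apply HU; auto]).
      assert (eta (S k)/theta (S k)^2 * d l
              = eta k/theta k^2 * d l + eta (S k)/theta (S k) * d l) by (rewrite Heq; ring).
      lra. }
  assert (Hsq : forall n, sum_f_R0 (fun j => sqrt (eta j)) n <= 2 * sqrt (eta n / theta n ^ 2)).
  { induction n.
    - rewrite sum0. rewrite Hth0. replace (eta 0%nat / 1^2) with (eta 0%nat) by field.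
      pose proof (sqrt_pos (eta 0%nat)); lra.
    - rewrite sumS. destruct (Hth n) as [[Ht0 Ht1] Heq]. destruct (thb n) as [Hn0 Hn1].
      pose proof (Heta (S n)). pose proof (Heta n).
      set (th := theta (S n)) in *.
      set (e := sqrt (eta (S n))).
      assert (He : 0 < e) by (apply sqrt_lt_R0; auto).
      assert (Hee : e*e = eta (S n)) by (apply sqrt_sqrt; lra).
      set (b := e / th).
      assert (Hb0 : 0 < b) by (apply Rdiv_lt_0_compat; lra).
      assert (Hb : sqrt (eta (S n) / th^2) = b).
      { rewrite <- Hee. replace (e*e/th^2) with (b*b) by (unfold b; field; lra).
        apply sqrt_square. lra. }
      rewrite Hb.
      set (A := eta n / theta n ^ 2) in *.
      assert (HA0 : 0 < A) by (unfold A; apply Rdiv_lt_0_compat; nra).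
      assert (HA : A = b*b - e*b). { rewrite Heq. rewrite <- Hee. unfold b. field. lra. }
      set (a := sqrt A) in *.
      assert (Ha : a * a = A) by (apply sqrt_sqrt; lra).
      assert (Ha0 : 0 <= a) by apply sqrt_pos.
      assert (b >= e) by nra.
      assert (a <= b - e/2) by nra.
      lra. }
  intros T HT l Hl.
  destruct T as [|k]; [lia|].
  replace (S k - 1)%nat with k by lia.
  assert (Hpos : forall n, sqrt (eta 0%nat) <= sum_f_R0 (fun j => sqrt (eta j)) n).
  { induction n; [rewrite sum0; lra| rewrite sumS; pose proof (sqrt_pos (eta (S n))); lra]. }
  set (Sig := sum_f_R0 (fun j => sqrt (eta j)) k).
  assert (HSig0 : 0 < Sig).
  { pose proof (Hpos k). pose proof (sqrt_lt_R0 _ (Heta 0%nat)). fold Sig in H. lra. }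
  assert (HSig : Sig <= 2 * sqrt (eta k / theta k ^ 2)) by apply Hsq.
  set (Sp := eta k / theta k ^ 2) in *.
  assert (HSp : 0 < Sp).
  { destruct (thb k). pose proof (Heta k). unfold Sp; apply Rdiv_lt_0_compat; nra. }
  assert (Hsq2 : Sig^2 <= 4 * Sp).
  { pose proof (sqrt_sqrt Sp ltac:(lra)). pose proof (sqrt_pos Sp). nra. }
  assert (Hmain : Sp * (d l - d (lam (S k))) <= G * Dh m h gh l (lam 0%nat)).
  { pose proof (HV k l Hl). pose proof (HQ k). pose proof (Hsumlow k l Hl).
    unfold obj in H, H0. fold Sp in H0, H1. lra. }
  pose proof (Dh_nonneg m L h gh l (lam 0%nat) Hs Hsc HC Hl (Llam _)) as HD.
  set (Dl := d l - d (lam (S k))) in *.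
  assert (Hk : Dl * Sig^2 <= 4 * G * Dh m h gh l (lam 0%nat)).
  { destruct (Rle_or_lt 0 Dl).
    - assert (Dl * Sig^2 <= Dl * (4*Sp)) by (apply Rmult_le_compat_l; auto). nra.
    - assert (0 < Sig^2) by nra. nra. }
  replace Dl with (Dl * Sig^2 / Sig^2) by (field; lra).
  unfold Rdiv. apply Rmult_le_compat_r; [left; apply Rinv_0_lt_compat; nra | exact Hk].
Qed.
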